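(* Let $(A=A_0\oplus A_1,\cdot,\alpha)$ be a super anticommutative Hom-superalgebra. Then for all homogeneous $w,x,y,z\in A$: (i) $\tilde{J}_A$ is super skew-symmetric: $\tilde{J}_A(x,y,z)=-(-1)^{\bar{x}\bar{y}}\tilde{J}_A(y,x,z)=-(-1)^{\bar{y}\bar{z}}\tilde{J}_A(x,z,y)=-(-1)^{\bar{x}(\bar{y}+\bar{z})+\bar{y}\bar{z}}\tilde{J}_A(z,y,x)$; (ii) \begin{align*} &\alpha^2(w)\tilde{J}_A(x,y,z)-(-1)^{\bar{w}(\bar{x}+\bar{y}+\bar{z})}\alpha^2(x)\tilde{J}_A(y,z,w)+(-1)^{(\bar{y}+\bar{z})(\bar{w}+\bar{x})}\alpha^2(y)\tilde{J}_A(z,w,x)-(-1)^{\bar{z}(\bar{x}+\bar{y}+\bar{w})}\alpha^2(z)\tilde{J}_A(w,x,y)\\ &=\tilde{J}_A(wx,\alpha(y),\alpha(z))+(-1)^{(\bar{y}+\bar{z})(\bar{x}+\bar{w})}\tilde{J}_A(yz,\alpha(w),\alpha(x))+(-1)^{\bar{x}(\bar{y}+\bar{z})}\tilde{J}_A(wy,\alpha(z),\alpha(x))\\ &\quad+(-1)^{\bar{z}(\bar{x}+\bar{y})+\bar{w}(\bar{x}+\bar{z})}\tilde{J}_A(zx,\alpha(w),\alpha(y))-(-1)^{\bar{z}(\bar{x}+\bar{y}+\bar{w})}\tilde{J}_A(zw,\alpha(x),\alpha(y))-(-1)^{\bar{w}(\bar{x}+\bar{y}+\bar{z})}\tilde{J}_A(xy,\alpha(z),\alpha(w)).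 \end{align*}
   Context: $\mathbb{K}$ is an algebraically closed field of characteristic $0$. A superspace is a $\mathbb{Z}_2$-graded vector space $A=A_0\oplus A_1$; the parity of a homogeneous $x$ is written $\bar{x}$. A Hom-superalgebra $(A,\cdot,\alpha)$ consists of a superspace $A$, an even bilinear product $(x,y)\mapsto xy$, and an even linear map $\alpha$ with $\alpha(xy)=\alpha(x)\alpha(y)$. It is super anticommutative if $xy=-(-1)^{\bar{x}\bar{y}}yx$ for homogeneous $x,y$. The Hom-super-Jacobian is $\tilde{J}_A(x,y,z)=(xy)\alpha(z)+(-1)^{\bar{x}(\bar{y}+\bar{z})}(yz)\alpha(x)+(-1)^{\bar{z}(\bar{x}+\bar{y})}(zx)\alpha(y)$. *)

(* Defs.v *)
From HB Require Import structures.
From mathcomp Require Import all_boot all_order all_algebra.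
Set Implicit Arguments. Unset Strict Implicit. Unset Printing Implicit Defensive.
Import GRing.Theory.
Local Open Scope ring_scope.

(* A superspace A = A_0 (+) A_1 over K is modelled as the product
   A0 * A1 of two K-vector spaces; x is homogeneous of parity p
   (p = false : even, p = true : odd) iff its other component vanishes. *)
Definition homog (K : fieldType) (A0 A1 : lmodType K) (x : A0 * A1) (p : bool)
  : Prop := if p then x.1 = 0 else x.2 = 0.

(* the sign (-1)^n, n a natural number (parities coerced bool -> nat) *)
Definition sgn (K : fieldType) (n : nat) : K := (-1) ^+ n.

Section HomSuper.
Variables (K : fieldType) (A0 A1 : lmodType K).
Local Notation A := (A0 * A1)%type.
Variables (mul : A -> A -> A) (alpha : A -> A).

Definition bilinear_prod : Prop :=
  (forall (a : K) (x y z : A), mul (a *: x + y) z = a *: mul x z + mul y z) /\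
  (forall (a : K) (x y z : A), mul z (a *: x + y) = a *: mul z x + mul z y).

Definition even_prod : Prop :=
  forall (x y : A) (px py : bool), homog x px -> homog y py ->
    homog (mul x y) (addb px py).

Definition even_linear_map : Prop :=
  (forall (a : K) (x y : A), alpha (a *: x + y) = a *: alpha x + alpha y) /\
  (forall (x : A) (p : bool), homog x p -> homog (alpha x) p).

Definition multiplicative : Prop :=
  forall x y : A, alpha (mul x y) = mul (alpha x) (alpha y).

Definition hom_superalgebra : Prop :=
  [/\ bilinear_prod, even_prod, even_linear_map & multiplicative].

Definition super_anticommutative : Prop :=
  forall (x y : A) (px py : bool), homog x px -> homog y py ->
    mul x y = - (sgn K (px * py) *: mul y x).

Definition superJ (px py pz : bool) (x y z : A) : A :=
  mul (mul x y) (alpha z)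
  + sgn K (px * (py + pz)) *: mul (mul y z) (alpha x)
  + sgn K (pz * (px + py)) *: mul (mul z x) (alpha y).

End HomSuper.

(* Main.v *)
Require Import Defs.
From HB Require Import structures.
From mathcomp Require Import all_boot all_order all_algebra.
Import GRing.Theory.
Local Open Scope ring_scope.

Inductive tm := TAt of nat | TAdd of tm & tm | TOpp of tm | TZero.

Fixpoint ev (V : zmodType) (env : seq V) (t : tm) : V :=
  match t with
  | TAt n => nth 0 env n
  | TAdd a b => ev V env a + ev V env b
  | TOpp a => - ev V env a
  | TZero => 0
  end.

Arguments ev {V} env t.
Fixpoint cf (t : tm) (i : nat) : int :=
  match t with
  | TAt n => if n == i then 1 else 0
  | TAdd a b => cf a i + cf b i
  | TOpp a => - cf a i
  | TZero => 0
  end.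

Lemma ev_sum (V : zmodType) (env : seq V) t :
  ev env t = \sum_(i < size env) nth 0 env i *~ cf t i.
Proof.
elim: t => [n|a IHa b IHb|a IHa|] /=.
- case: (ltnP n (size env)) => hn.
  + rewrite (bigD1 (Ordinal hn)) //= eqxx mulr1z big1 ?addr0 //.
    move=> i /negPf hi; case: eqP => e; last by rewrite mulr0z.
    by move: hi; rewrite -(inj_eq val_inj) /= e eqxx.
  + rewrite nth_default // big1 // => i _.
    case: eqP => e; last by rewrite mulr0z. move: (ltn_ord i); rewrite -e ltnNge hn //.
- by rewrite IHa IHb -big_split /=; apply: eq_bigr => i _; rewrite mulrzDr.
- by rewrite IHa -sumrN; apply: eq_bigr => i _; rewrite mulrNz.
- by rewrite big1.
Qed.

Lemma ev0 (V : zmodType) (env : seq V) t :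
  all (fun i => cf t i == 0) (iota 0 (size env)) -> ev env t = 0.
Proof.
move/allP=> h; rewrite ev_sum big1 // => i _.
by rewrite (eqP (h i _)) // mem_iota /= add0n ltn_ord.
Qed.

Lemma refl_eq (V : zmodType) (env : seq V) (a b : V) tl tr :
  ev env tl = a -> ev env tr = b ->
  all (fun i => cf (TAdd tl (TOpp tr)) i == 0) (iota 0 (size env)) -> a = b.
Proof. by move=> <- <- /ev0 /= /eqP; rewrite subr_eq0 => /eqP. Qed.

Ltac lookup x env :=
  lazymatch env with
  | cons x _ => constr:(O)
  | cons _ ?r => let n := lookup x r in constr:(S n)
  end.
Ltac len env :=
  lazymatch env with
  | nil => constr:(O)
  | cons _ ?r => let n := len r in constr:(S n)
  end.
Ltac app x env :=
  lazymatch env with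
  | nil => constr:(cons x nil)
  | cons ?a ?r => let r' := app x r in constr:(cons a r')
  end.

Ltac reify env t :=
  lazymatch t with
  | ?a + ?b =>
      let p := reify env a in
      lazymatch p with (?ta, ?e1) =>
        let q := reify e1 b in
        lazymatch q with (?tb, ?e2) => constr:((TAdd ta tb, e2)) end end
  | - ?a =>
      let p := reify env a in
      lazymatch p with (?ta, ?e1) => constr:((TOpp ta, e1)) end
  | 0 => constr:((TZero, env))
  | _ =>
      match constr:(tt) with
      | _ => let n := lookup t env in constr:((TAt n, env))
      | _ => let n := len env in let e := app t env in constr:((TAt n, e))
      end
  end.

Ltac zsolve :=
  lazymatch goal with
  | |- @eq ?V ?a ?b =>
    let p := reify (@nil V) a in
    lazymatch p with (?ta, ?e1) =>
      let q := reify e1 b in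
      lazymatch q with (?tb, ?e2) =>
        apply: (@refl_eq V e2 a b ta tb erefl erefl); vm_compute; reflexivity
      end end
  end.



Ltac hom HM HA := first [ eassumption | apply: HM; hom HM HA | apply: HA; hom HM HA ].
Ltac sw H HM HA u v :=
  let e := fresh "e" in
  have e := H u v _ _ ltac:(hom HM HA) ltac:(hom HM HA); rewrite ?e; clear e.

Lemma sgn_e (K : fieldType) n : odd n = false -> sgn K n = 1.
Proof. by move=> h; rewrite /sgn -signr_odd h. Qed.
Lemma sgn_o (K : fieldType) n : odd n = true -> sgn K n = -1.
Proof. by move=> h; rewrite /sgn -signr_odd h expr1. Qed.

Ltac sgnsimp :=
  repeat match goal with
  | |- context [sgn ?K ?n] =>
    let b := eval vm_compute in (odd n) in
    lazymatch b with
    | true => rewrite (@sgn_o K n erefl)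
    | false => rewrite (@sgn_e K n erefl)
    end
  end; rewrite ?scale1r ?scaleN1r.

Lemma gen_main (K : fieldType)
  (A0 A1 : lmodType K) (mul : A0 * A1 -> A0 * A1 -> A0 * A1)
  (alpha : A0 * A1 -> A0 * A1)
  (hA : hom_superalgebra mul alpha) (hanti : super_anticommutative mul) :
  (forall (x y z : A0 * A1) (px py pz : bool),
     homog x px -> homog y py -> homog z pz ->
     let J := superJ mul alpha in
     [/\ J px py pz x y z = - (sgn K (px * py) *: J py px pz y x z),
         J px py pz x y z = - (sgn K (py * pz) *: J px pz py x z y)
       & J px py pz x y z
           = - (sgn K (px * (py + pz) + py * pz) *: J pz py px z y x)]) /\
  (forall (w x y z : A0 * A1) (pw px py pz : bool),
     homog w pw -> homog x px -> homog y py -> homog z pz ->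
     let J := superJ mul alpha in
     mul (alpha (alpha w)) (J px py pz x y z)
     - sgn K (pw * (px + py + pz)) *: mul (alpha (alpha x)) (J py pz pw y z w)
     + sgn K ((py + pz) * (pw + px)) *: mul (alpha (alpha y)) (J pz pw px z w x)
     - sgn K (pz * (px + py + pw)) *: mul (alpha (alpha z)) (J pw px py w x y)
     =
     J (addb pw px) py pz (mul w x) (alpha y) (alpha z)
     + sgn K ((py + pz) * (px + pw)) *: J (addb py pz) pw px (mul y z) (alpha w) (alpha x)
     + sgn K (px * (py + pz)) *: J (addb pw py) pz px (mul w y) (alpha z) (alpha x)
     + sgn K (pz * (px + py) + pw * (px + pz)) *: J (addb pz px) pw py (mul z x) (alpha w) (alpha y)
     - sgn K (pz * (px + py + pw)) *: J (addb pz pw) px py (mul z w) (alpha x) (alpha y)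
     - sgn K (pw * (px + py + pz)) *: J (addb px py) pz pw (mul x y) (alpha z) (alpha w)).
Proof.
have [[bl br] hev [alL homA] hmul] := hA.
have mulDl : forall u v t, mul (u + v) t = mul u t + mul v t.
  by move=> u v t; rewrite -(scale1r u) bl !scale1r.
have mulDr : forall u v t, mul t (u + v) = mul t u + mul t v.
  by move=> u v t; rewrite -(scale1r u) br !scale1r.
have mul0l : forall t, mul 0 t = 0.
  by move=> t; apply: (addrI (mul 0 t)); rewrite addr0 -mulDl addr0.
have mul0r : forall t, mul t 0 = 0.
  by move=> t; apply: (addrI (mul t 0)); rewrite addr0 -mulDr addr0.
have mulNl : forall u t, mul (- u) t = - mul u t.
  by move=> u t; rewrite -scaleN1r -(addr0 (-1 *: u)) bl mul0l addr0 scaleN1r.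
have mulNr : forall u t, mul t (- u) = - mul t u.
  by move=> u t; rewrite -scaleN1r -(addr0 (-1 *: u)) br mul0r addr0 scaleN1r.
have al0 : alpha 0 = 0.
  by apply: (addrI (alpha 0)); rewrite addr0 -{1}(scale1r (alpha 0)) -alL scale1r addr0.
have alD : forall u v, alpha (u + v) = alpha u + alpha v.
  by move=> u v; rewrite -(scale1r u) alL !scale1r.
have alN : forall u, alpha (- u) = - alpha u.
  by move=> u; rewrite -scaleN1r -(addr0 (-1 *: u)) alL al0 addr0 scaleN1r.
have homM : forall u v pu pv, homog u pu -> homog v pv -> homog (mul u v) (addb pu pv).
  exact: hev.
split.
  move=> x y z px py pz hx hy hz J; rewrite /J /superJ.
  move: hx hy hz; case: px; case: py; case: pz => hx hy hz;
  (split; sgnsimp; rewrite ?(mulDl, mulDr, mulNl, mulNr, alD, alN, hmul);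
   sw hanti homM homA y x; sw hanti homM homA z x; sw hanti homM homA z y;
   sgnsimp; rewrite ?(mulDl, mulDr, mulNl, mulNr, alD, alN, hmul); zsolve).
move=> w x y z pw px py pz hw hx hy hz J; rewrite /J /superJ.
move: hw hx hy hz; case: pw; case: px; case: py; case: pz => hw hx hy hz;
 sgnsimp; rewrite ?(mulDl, mulDr, mulNl, mulNr, alD, alN, hmul);
 sw hanti homM homA (x) (w); sw hanti homM homA (alpha x) (alpha w); sw hanti homM homA (y) (w); sw hanti homM homA (alpha y) (alpha w); sw hanti homM homA (z) (w); sw hanti homM homA (alpha z) (alpha w); sw hanti homM homA (y) (x); sw hanti homM homA (alpha y) (alpha x); sw hanti homM homA (z) (x); sw hanti homM homA (alpha z) (alpha x); sw hanti homM homA (z) (y); sw hanti homM homA (alpha z) (alpha y);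
 sgnsimp; rewrite ?(mulDl, mulDr, mulNl, mulNr, alD, alN, hmul);
 sw hanti homM homA (alpha y) (mul w x); sw hanti homM homA (alpha z) (mul w x); sw hanti homM homA (alpha x) (mul w y); sw hanti homM homA (alpha z) (mul w y); sw hanti homM homA (alpha x) (mul w z); sw hanti homM homA (alpha y) (mul w z); sw hanti homM homA (alpha w) (mul x y); sw hanti homM homA (alpha z) (mul x y); sw hanti homM homA (alpha w) (mul x z); sw hanti homM homA (alpha y) (mul x z); sw hanti homM homA (alpha w) (mul y z); sw hanti homM homA (alpha x) (mul y z); sw hanti homM homA (mul (alpha x) (alpha y)) (mul (alpha w) (alpha z)); sw hanti homM homA (mul (alpha x) (alpha z)) (mul (alpha w) (alpha y)); sw hanti homM homA (mul (alpha y) (alpha z)) (mul (alpha w) (alpha x));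
 sgnsimp; rewrite ?(mulDl, mulDr, mulNl, mulNr, alD, alN, hmul);
 sw hanti homM homA (alpha (alpha z)) (mul (mul w x) (alpha y)); sw hanti homM homA (alpha (alpha y)) (mul (mul w x) (alpha z)); sw hanti homM homA (alpha (alpha z)) (mul (mul w y) (alpha x)); sw hanti homM homA (alpha (alpha x)) (mul (mul w y) (alpha z)); sw hanti homM homA (alpha (alpha y)) (mul (mul w z) (alpha x)); sw hanti homM homA (alpha (alpha x)) (mul (mul w z) (alpha y)); sw hanti homM homA (alpha (alpha z)) (mul (mul x y) (alpha w)); sw hanti homM homA (alpha (alpha w)) (mul (mul x y) (alpha z)); sw hanti homM homA (alpha (alpha y)) (mul (mul x z) (alpha w)); sw hanti homM homA (alpha (alpha w)) (mul (mul x z) (alpha y)); sw hanti homM homA (alpha (alpha x)) (mul (mul y z) (alpha w)); sw hanti homM homA (alpha (alpha w)) (mul (mul y z) (alpha x));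
 sgnsimp; rewrite ?(mulDl, mulDr, mulNl, mulNr, alD, alN, hmul);
 zsolve.
Qed.

Theorem lemma2p5 (K : closedFieldType) (hchar : [pchar K] =i pred0)
  (A0 A1 : lmodType K) (mul : A0 * A1 -> A0 * A1 -> A0 * A1)
  (alpha : A0 * A1 -> A0 * A1)
  (hA : hom_superalgebra mul alpha) (hanti : super_anticommutative mul) :
  (forall (x y z : A0 * A1) (px py pz : bool),
     homog x px -> homog y py -> homog z pz ->
     let J := superJ mul alpha in
     [/\ J px py pz x y z = - (sgn K (px * py) *: J py px pz y x z),
         J px py pz x y z = - (sgn K (py * pz) *: J px pz py x z y)
       & J px py pz x y z
           = - (sgn K (px * (py + pz) + py * pz) *: J pz py px z y x)]) /\
  (forall (w x y z : A0 * A1) (pw px py pz : bool),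
     homog w pw -> homog x px -> homog y py -> homog z pz ->
     let J := superJ mul alpha in
     mul (alpha (alpha w)) (J px py pz x y z)
     - sgn K (pw * (px + py + pz)) *: mul (alpha (alpha x)) (J py pz pw y z w)
     + sgn K ((py + pz) * (pw + px)) *: mul (alpha (alpha y)) (J pz pw px z w x)
     - sgn K (pz * (px + py + pw)) *: mul (alpha (alpha z)) (J pw px py w x y)
     =
     J (addb pw px) py pz (mul w x) (alpha y) (alpha z)
     + sgn K ((py + pz) * (px + pw)) *: J (addb py pz) pw px (mul y z) (alpha w) (alpha x)
     + sgn K (px * (py + pz)) *: J (addb pw py) pz px (mul w y) (alpha z) (alpha x)
     + sgn K (pz * (px + py) + pw * (px + pz)) *: J (addb pz px) pw py (mul z x) (alpha w) (alpha y)
     - sgn K (pz * (px + py + pw)) *: J (addb pz pw) px py (mul z w) (alpha x) (alpha y)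
     - sgn K (pw * (px + py + pz)) *: J (addb px py) pz pw (mul x y) (alpha z) (alpha w)).
Proof. exact (@gen_main K A0 A1 mul alpha hA hanti). Qed.
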